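(* Let $G=(V,E)$ be any $n$-vertex $d$-regular graph with girth at least $g$. For any map $\psi:V\to V$ with $\mathrm{rad}_G(\psi)<g/2-1$, we have $$\Pr_{v\in V}\left[|\psi(N_G(v))|<d-\sqrt{d}\right]<\frac{1}{\sqrt{d}},$$ where $v$ is chosen uniformly at random from $V$.
   Context: $G$ is an undirected unweighted graph; $d_G$ denotes its shortest-path metric and $N_G(v)$ the set of neighbors of $v$. The girth of $G$ is the length of its shortest cycle. For $\psi:V\to V$, $\mathrm{rad}_G(\psi)=\max_{v\in V}d_G(v,\psi(v))$. *)

(* Defs.v *)
From mathcomp Require Import all_boot all_order all_algebra.
Set Implicit Arguments. Unset Strict Implicit. Unset Printing Implicit Defensive.
Import Order.TTheory GRing.Theory Num.Theory.

Definition simple_graph (T : finType) (e : rel T) : Prop :=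
  symmetric e /\ irreflexive e.

Definition nbhd (T : finType) (e : rel T) (v : T) : {set T} := [set w | e v w].

Definition regular (T : finType) (e : rel T) (d : nat) : Prop :=
  forall v : T, #|nbhd e v| = d.

(* An acyclic graph has infinite girth, so the condition holds vacuously. *)
Definition girth_ge (T : finType) (e : rel T) (g : nat) : Prop :=
  forall s : seq T, uniq s -> (3 <= size s)%N -> cycle e s -> (g <= size s)%N.

Fixpoint walk (T : finType) (e : rel T) (k : nat) (x y : T) : bool :=
  if k is k'.+1 then [exists z, e x z && walk e k' z y] else x == y.

(* d_G(x,y) < r, where d_G(x,y) = min { k | walk of length k from x to y }
   (= +oo if none).  The minimum is < r iff some walk has length < r. *)
Definition dist_lt (R : numDomainType) (T : finType) (e : rel T) (x y : T) (r : R) : Prop :=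
  exists k : nat, walk e k x y /\ (k%:R < r)%R.

Definition rad_lt (R : numDomainType) (T : finType) (e : rel T) (psi : T -> T) (r : R) : Prop :=
  forall v : T, dist_lt e v (psi v) r.

(* Main.v *)
Require Import Defs.
From mathcomp Require Import all_boot all_order all_algebra.
From mathcomp Require Import zify lra.
Import Order.TTheory GRing.Theory Num.Theory.
Set Implicit Arguments. Unset Strict Implicit.

Lemma last_take' (T : Type) (x : T) (p : seq T) i :
  i <= size p -> last x (take i p) = nth x (x :: p) i.
Proof.
elim: p x i => [|y p IH] x [|i] //= Hi.
by rewrite IH // (set_nth_default y x) //=.
Qed.

Lemma path_drop (T : Type) (e : rel T) x p j :
  path e x p -> j <= size p ->
  path e (nth x (x :: p) j) (drop j p) /\ last (nth x (x :: p) j) (drop j p) = last x p.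
Proof.
move=> Hp Hj.
have := Hp; rewrite -{1}(cat_take_drop j p) cat_path => /andP [_ H2].
rewrite -last_take' //; split => //.
by rewrite -last_cat cat_take_drop.
Qed.

Lemma path_take (T : Type) (e : rel T) x p j :
  path e x p -> path e x (take j p).
Proof. by move=> Hp; move: Hp; rewrite -{1}(cat_take_drop j p) cat_path => /andP []. Qed.

Lemma minwalk (T : eqType) (e : rel T) x p :
  path e x p ->
  (forall p', path e x p' -> last x p' = last x p -> size p <= size p') ->
  uniq (x :: p) /\ (forall i, i < size p -> e x (nth x p i) -> i = 0).
Proof.
move=> Hp Hmin; split.
  apply/negPn/negP => /(uniqPn x) [i [j [Hij Hj Heq]]].
  have Hj' : j <= size p by rewrite /= in Hj.
  have Hi' : i <= size p by lia.
  have [Hd Hl] := path_drop Hp Hj'.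
  have Hpt := path_take i Hp.
  have := Hmin (take i p ++ drop j p).
  rewrite cat_path last_cat last_take' // Heq Hpt Hd Hl size_cat size_take size_drop.
  move=> /(_ isT erefl).
  case: ltnP => Hi2; lia.
move=> [//|i] Hi Hx.
have [Hd Hl] := path_drop Hp Hi.
have := Hmin (nth x p i.+1 :: drop i.+2 p).
rewrite /= Hx Hd Hl size_drop => /(_ isT erefl). lia.
Qed.
Lemma last_mem (T : eqType) (s : T) p : p != [::] -> last s p \in p.
Proof. by case: p => [|y p] //= _; rewrite mem_last. Qed.

Lemma cyc (T : eqType) (e : rel T) s p q :
  symmetric e -> path e s p -> path e s q -> uniq (s :: p) -> uniq (s :: q) ->
  p != [::] -> q != [::] -> last s p = last s q -> head s p != head s q ->
  exists c, [/\ uniq c, 3 <= size c, cycle e c & size c <= size p + size q].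
Proof.
move=> Hsym Hp Hq Hup Huq Hp0 Hq0 Hl Hh.
have Hz : has (mem q) p.
  by apply/hasP; exists (last s p); [exact: last_mem | rewrite /= Hl last_mem].
move: Hp Hup Hp0 Hl Hh; case: (split_find Hz) => z p1 p2 Hzq Hnh.
move=> Hp Hup _ Hl Hh.
move: Hq Huq Hq0 Hl Hh Hnh; case: (path.splitP Hzq) => q1 q2.
move=> Hq Huq _ Hl Hh Hnh.
exists (s :: (rcons p1 z ++ rev q1)); split.
- move: Hup Huq; rewrite /= !cat_uniq !rev_uniq !mem_cat !mem_rcons !in_cons !mem_rev
     !rcons_uniq.
  case/and4P => Hs1 -> _ _ /and4P [Hs2 /andP [Hzq1 ->] _ _] /=.
  rewrite andbT; apply/andP; split.
    move: Hs1 Hs2; rewrite !negb_or => /andP [/andP [-> ->] _] /andP [/andP [_ ->] _] //. apply/hasPn => y; rewrite mem_rev mem_rcons in_cons => Hy.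
  apply/negP => /orP [/eqP Hyz | Hyp1].
    by subst y; rewrite Hy in Hzq1.
  move/hasPn: Hnh => /(_ y Hyp1) /negP; apply.
  by rewrite /= mem_cat mem_rcons in_cons Hy orbT.
- rewrite /= size_cat size_rcons size_rev.
  case: p1 Hh {Hp Hup Hnh Hl} => [|a p1]; case: q1 {Hq Huq} => [|b q1] //=.
  by rewrite eqxx.
- rewrite /= rcons_cat cat_path.
  have := Hp; rewrite cat_path => /andP [-> _] /=.
  rewrite last_rcons.
  have := Hq; rewrite cat_path => /andP [Hq1 _].
  rewrite -rev_cons.
  have := rev_path e s (rcons q1 z). rewrite last_rcons belast_rcons => ->.
  by rewrite (eq_path (e' := e)) // => a b; rewrite Hsym.
- rewrite /= !size_cat !size_rcons size_rev. lia.
Qed.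
Lemma walk_seq (T : finType) (e : rel T) k x y :
  walk e k x y <-> exists p, [/\ size p = k, path e x p & last x p = y].
Proof.
elim: k x => [|k IH] x /=.
  split; first by move/eqP => ->; exists [::].
  by case=> [[|a p]] [] //= _ _ ->.
split.
  case/existsP => z /andP [Hxz /IH [p [Hs Hp Hl]]].
  by exists (z :: p); rewrite /= Hxz Hs Hp Hl.
case=> [[|z p]] [] //= [Hs] /andP [Hxz Hp] Hl.
apply/existsP; exists z; rewrite Hxz /=; apply/IH; by exists p.
Qed.

Lemma girth_contra (a b z g : nat) : (2*a+2 < g)%N -> (2*b+2 < g)%N -> (g <= z)%N ->
  (z <= a.+1 + b.+1)%N -> False.
Proof. lia. Qed.

Local Open Scope ring_scope.

Theorem lemma1 (R : rcfType) (V : finType) (e : rel V) (n d g : nat)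
  (Hsimple : simple_graph e) (Hn : #|V| = n) (Hn0 : (0 < n)%N) (Hd0 : (0 < d)%N)
  (Hreg : regular e d) (Hgirth : girth_ge e g) (psi : V -> V)
  (Hrad : rad_lt e psi ((g%:R : R) / 2 - 1)) :
  (#|[set v : V | (#|psi @: nbhd e v|%:R : R) < d%:R - Num.sqrt (d%:R)]|%:R / n%:R : R)
    < 1 / Num.sqrt (d%:R).
Proof.
have [Hsym Hirr] := Hsimple.
have Hex : forall u, exists k, walk e k u (psi u).
  by move=> u; have [k [Hk _]] := Hrad u; exists k.
pose m u := ex_minn (Hex u).
have Hm : forall u, walk e (m u) u (psi u) /\ forall k, walk e k u (psi u) -> (m u <= k)%N.
  by move=> u; rewrite /m; case: ex_minnP.
have Hmg : forall u, (2 * m u + 2 < g)%N.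
  move=> u; have [k [Hk Hkg]] := Hrad u.
  have Hmk := (Hm u).2 k Hk.
  have : ((2 * k + 2)%:R : R) < g%:R by rewrite natrD natrM; lra.
  rewrite ltr_nat; lia.
have Hmseq : forall u p, path e u p -> last u p = psi u -> size p = m u ->
    uniq (u :: p) /\ (forall i, (i < size p)%N -> e u (nth u p i) -> i = 0%N).
  move=> u p Hp Hl Hs; apply: minwalk => // p' Hp' Hl'.
  rewrite Hs; apply: (Hm u).2; apply/walk_seq; exists p'; split => //; by rewrite Hl' Hl.
pose F u v := e u v && walk e (m u).-1 v (psi u).
have HFm : forall u v, F u v -> exists p, [/\ path e u (v :: p), last v p = psi u,
     size (v :: p) = m u & uniq (u :: v :: p)].
  move=> u v; rewrite /F => /andP [Huv /walk_seq [p [Hs Hp Hl]]].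
  have Hm0 : m u <> 0%N.
    move=> Hm0; have := (Hm u).1; rewrite Hm0 /= => /eqP Hu.
    rewrite Hm0 in Hs; move: Hl; rewrite (size0nil Hs) /= => Hv.
    rewrite Hv -Hu in Huv.
    by rewrite Hirr in Huv.
  have Hsz : size (v :: p) = m u by rewrite /= Hs; lia.
  exists p; split => //=; first by rewrite Huv.
  by have [] := Hmseq u (v :: p); rewrite //= ?Huv.
have HFuniq : forall u v v', F u v -> F u v' -> v = v'.
  move=> u v v' Hv Hv'; case: (eqVneq v v') => // Hne; exfalso.
  have [p [Hp Hl Hs Hu]] := HFm u v Hv.
  have [p' [Hp' Hl' Hs' Hu']] := HFm u v' Hv'.
  have [c [Huc Hc3 Hcc Hcs]] := cyc Hsym Hp Hp' Hu Hu' isT isT (etrans Hl (esym Hl')) Hne.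
  apply: (girth_contra (Hmg u) (Hmg u) (Hgirth c Huc Hc3 Hcc)).
  rewrite Hs Hs' in Hcs; apply: (leq_trans Hcs); rewrite addnS addSn ltnW // ltnS leqnSn.
pose f u := odflt u [pick z | F u z].
have HfF : forall u v, F u v -> f u = v.
  move=> u v Hv; rewrite /f; case: pickP => [z Hz|H] /=; first exact: HFuniq Hz Hv.
  by rewrite H in Hv.
have Hgeo : forall u v, e v u -> f u != v -> exists pu,
    [/\ path e v (u :: pu), last u pu = psi u, size pu = m u & uniq (v :: u :: pu)].
  move=> u v Hvu Hfu.
  have [pu [Hs Hp Hl]] := (walk_seq e (m u) u (psi u)).1 (Hm u).1.
  have [Huu Hsc] := Hmseq u pu Hp Hl Hs.
  exists pu; split => //=; first by rewrite Hvu.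
  move: (Huu) => /= ->; rewrite andbT in_cons negb_or; apply/andP; split.
    by apply/negP => /eqP Hvu'; rewrite Hvu' Hirr in Hvu.
  apply/negP => Hv.
  have Hi := Hsc (index v pu); rewrite index_mem (nth_index u Hv) Hsym in Hi.
  have Hi0 := Hi Hv Hvu.
  move: Hp Hl Hs Hi0 Hv; case: pu {Huu Hsc Hi} => [|a pu] //= /andP [Hua Hp] Hl Hs.
  case: eqP => // Hav _ _; subst a.
  move/negP: Hfu; apply; apply/eqP/HfF; rewrite /F -Hs /= Hua; apply/walk_seq.
  by exists pu.
have Hclaim : forall v u w, e v u -> e v w -> u != w -> psi u = psi w ->
    f u != v -> f w != v -> False.
  move=> v u w Hu Hw Hne Heq Hfu Hfw.
  have [pu [Hpu Hlu Hsu Huu]] := Hgeo u v Hu Hfu.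
  have [pw [Hpw Hlw Hsw Huw]] := Hgeo w v Hw Hfw.
  have [c [Huc Hc3 Hcc Hcs]] := cyc Hsym Hpu Hpw Huu Huw isT isT
      (etrans Hlu (etrans Heq (esym Hlw))) Hne.
  apply: (girth_contra (Hmg u) (Hmg w) (Hgirth c Huc Hc3 Hcc)).
  by rewrite /= Hsu Hsw in Hcs.
pose B v := [set u | e v u && (f u == v)].
have Hloss : forall v, (d <= #|psi @: nbhd e v| + #|B v|)%N.
  move=> v.
  have Hinj : {in nbhd e v :\: B v &, injective psi}.
    move=> u w; rewrite /nbhd !inE => /andP [HuB Hu] /andP [HwB Hw] Heq.
    case: (eqVneq u w) => // Hne; exfalso.
    apply: (Hclaim v u w Hu Hw Hne Heq).
      by move: HuB; rewrite Hu.
    by move: HwB; rewrite Hw.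
  have H1 := card_in_imset Hinj.
  have H2 : (#|psi @: (nbhd e v :\: B v)| <= #|psi @: nbhd e v|)%N.
    by apply: subset_leq_card; apply: imsetS; apply: subsetDl.
  have H3 := cardsD (nbhd e v) (B v).
  have H4 : (#|nbhd e v :&: B v| <= #|B v|)%N by apply: subset_leq_card; apply: subsetIr.
  have H5 := Hreg v.
  clear -H1 H2 H3 H4 H5; lia.
have Hsum : (\sum_v #|B v| <= n)%N.
  apply: (@leq_trans (\sum_v #|[set u | f u == v]|)).
    apply: leq_sum => v _; apply: subset_leq_card; apply/subsetP => u.
    by rewrite !inE => /andP [_ ->].
  rewrite -Hn (eq_bigr (fun v => \sum_u (f u == v : nat))); last first.
    move=> v _; rewrite -sum1_card big_mkcond /=; apply: eq_bigr => u _.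
    by rewrite inE; case: (f u == v).
  rewrite exchange_big /= -sum1_card; apply: leq_sum => u _.
  rewrite (bigD1 (f u)) //= eqxx big1 // => v /negbTE; rewrite eq_sym => ->.
  by [].
set S := [set v | _].
have Hs : 0 < Num.sqrt (d%:R : R) by rewrite sqrtr_gt0 ltr0n.
have Hn' : 0 < (n%:R : R) by rewrite ltr0n.
rewrite ltr_pdivrMr // mul1r mulrC ltr_pdivlMr //.
case: (set_0Vmem S) => [-> | [v0 Hv0]].
  by rewrite cards0 mul0r.
have HvS : forall v, v \in S -> Num.sqrt (d%:R : R) < #|B v|%:R.
  move=> v; rewrite inE => Hv.
  have := Hloss v; rewrite -(ler_nat R) natrD => Hl.
  lra.
apply: (@lt_le_trans _ _ (\sum_(v in S) (#|B v|%:R : R))).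
  rewrite mulr_natl -sumr_const; apply: ltr_sum => //.
  by apply/hasP; exists v0 => //; rewrite mem_index_enum.
apply: (@le_trans _ _ (\sum_v (#|B v|%:R : R))).
  rewrite [X in _ <= X](bigID (fun v => v \in S)) /= lerDl.
  by apply: sumr_ge0 => v _; rewrite ler0n.
by rewrite -natr_sum ler_nat.
Qed.
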